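(* Let $L$ be an atomic $0$-distributive lattice with at least three atoms. Then $\operatorname{sdim}_M(G^c(L))$ is finite if and only if $G^c(L)$ is finite.
   Context: A lattice $L$ with $0$ is $0$-distributive if $a\wedge b=0$ and $a\wedge c=0$ imply $a\wedge(b\vee c)=0$; atomic means every nonzero element lies above an atom. $Z^*(L)=\{a\in L\setminus\{0\}:\ a\wedge b=0\text{ for some } b\neq 0\}$; $G^c(L)$ has vertex set $Z^*(L)$, distinct $a,b$ adjacent iff $a\wedge b\neq 0$ (connected under these hypotheses). For a connected graph $G$, a vertex $w$ strongly resolves $u,v$ if some shortest $u$–$w$ path contains $v$ or some shortest $v$–$w$ path contains $u$; a strong resolving set is a set $W$ such that every pair of distinct vertices is strongly resolved by some vertex of $W$; $\operatorname{sdim}_M(G)$ is the minimum cardinality of a strong resolving set. *)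

(* Defs.v *)
From mathcomp Require Import all_boot all_order.
Set Implicit Arguments. Unset Strict Implicit. Unset Printing Implicit Defensive.
Import Order.TTheory.

Section Lat.
Context {d : Order.disp_t} {L : bLatticeType d}.

Definition zero_distributive : Prop :=
  forall a b c : L, Order.meet a b = Order.bottom -> Order.meet a c = Order.bottom ->
    Order.meet a (Order.join b c) = Order.bottom.

Definition is_atom (a : L) : Prop :=
  a <> Order.bottom /\ forall x : L, (x <= a)%O -> x = Order.bottom \/ x = a.

Definition atomic : Prop :=
  forall x : L, x <> Order.bottom -> exists a, is_atom a /\ (a <= x)%O.

Definition at_least_three_atoms : Prop :=
  exists a b c : L, [/\ is_atom a, is_atom b & is_atom c] /\
                    [/\ a <> b, a <> c & b <> c].

Definition Zstar (a : L) : Prop :=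
  a <> Order.bottom /\ exists b : L, b <> Order.bottom /\ Order.meet a b = Order.bottom.

Definition Gc_adj (a b : L) : Prop := a <> b /\ Order.meet a b <> Order.bottom.
End Lat.

Section Graph.
Context {T : eqType} (V : T -> Prop) (E : T -> T -> Prop).

Fixpoint walk_from (x : T) (p : seq T) : Prop :=
  V x /\ match p with
         | [::] => True
         | y :: q => E x y /\ walk_from y q
         end.

(* x :: p is a u-w walk of length size p *)
Definition uw_walk (u w : T) (p : seq T) : Prop := walk_from u p /\ last u p = w.

Definition shortest_path (u w : T) (p : seq T) : Prop :=
  uw_walk u w p /\ forall q, uw_walk u w q -> size p <= size q.

Definition strongly_resolves (w u v : T) : Prop :=
  (exists p, shortest_path u w p /\ v \in u :: p) \/
  (exists p, shortest_path v w p /\ u \in v :: p).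

Definition strong_resolving_set (W : T -> Prop) : Prop :=
  (forall w, W w -> V w) /\
  forall u v, V u -> V v -> u <> v -> exists w, W w /\ strongly_resolves w u v.

Definition sdim_finite : Prop :=
  exists s : seq T, strong_resolving_set (fun w => w \in s).

Definition graph_finite : Prop :=
  exists s : seq T, forall x, V x -> x \in s.
End Graph.

(* Main.v *)
Require Import Defs.
From mathcomp Require Import all_boot all_order.
From Stdlib Require Import Classical.
Set Implicit Arguments. Unset Strict Implicit. Unset Printing Implicit Defensive.
Import Order.TTheory.
From mathcomp Require Import zify.

Section G.
Context {T : eqType} (V : T -> Prop) (E : T -> T -> Prop).

Lemma walk_split (p : seq T) (u v w : T) :
  walk_from V E u p -> last u p = w -> v \in u :: p ->
  exists p1 p2, p = p1 ++ p2 /\ uw_walk V E u v p1 /\ uw_walk V E v w p2.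
Proof.
elim: p u => [|y q IH] u /=.
  move=> [Vu _] Hl; subst w; rewrite inE => /eqP ->.
  by exists [::], [::]; split; [|split]; split.
move=> [Vu [Euy Wy]] Hl; rewrite inE => /orP [/eqP ->|Hv].
  exists [::], (y :: q); split => //; split; split => //.
have [p1 [p2 [-> [[W1 L1] W2]]]] := IH y Wy Hl Hv.
exists (y :: p1), p2; split => //; split => //; split => //.
Qed.

Lemma size_ge1 u w p : uw_walk V E u w p -> u <> w -> 1 <= size p.
Proof. by case: p => [|y q] // [_ /= ->]. Qed.

Lemma size_ge2 u w p : uw_walk V E u w p -> u <> w -> ~ E u w -> 2 <= size p.
Proof.
case: p => [|y [|z q]] // [] /=; first by move=> _ ->.
by move=> [_ [Euy _]] <-.
Qed.

Lemma exists_shortest u w : forall n, (exists q, uw_walk V E u w q /\ size q <= n) ->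
  exists p, shortest_path V E u w p.
Proof.
elim=> [|n IH] [q [Wq Sq]].
  by exists q; split => // q' _; move: Sq; rewrite leqn0 => /eqP ->.
case: (classic (exists q', uw_walk V E u w q' /\ size q' <= n)) => [H|H]; first exact: IH.
exists q; split => // q' Wq'; apply: leq_trans Sq _.
rewrite ltnNge; apply/negP => Hs; apply: H; by exists q'.
Qed.

Lemma filter_ex (s : seq T) : exists s' : seq T, forall x, x \in s' <-> (x \in s /\ V x).
Proof.
elim: s => [|a s [s' Hs']]; first by exists [::] => x; rewrite in_nil; split => // [[]].
case: (classic (V a)) => Va.
  exists (a :: s') => x; rewrite !inE; split.
    case/orP => [/eqP ->|/Hs' [-> ?]]; by rewrite ?eqxx ?orbT.
  case=> /orP [/eqP ->|Hx] Vx; first by rewrite eqxx.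
  by apply/orP; right; apply/Hs'.
exists s' => x; rewrite inE; split.
  by move/Hs' => [-> ?]; rewrite orbT.
by case=> /orP [/eqP ->|Hx] Vx //; apply/Hs'.
Qed.

Lemma fin_inj (K : finType) (f : T -> K) (P : T -> Prop) :
  (forall x y, P x -> P y -> f x = f y -> x = y) -> exists s : seq T, forall x, P x -> x \in s.
Proof.
move=> Hi.
suff [s Hs] : exists s : seq T, forall x, P x -> f x \in enum K -> x \in s.
  by exists s => x Px; apply: Hs => //; rewrite mem_enum.
elim: (enum K) => [|k ks [s Hs]]; first by exists [::] => x _; rewrite in_nil.
case: (classic (exists x, P x /\ f x = k)) => [[x0 [P0 F0]]|H].
  exists (x0 :: s) => x Px; rewrite !inE => /orP [/eqP Fx|Fx].
    by rewrite (Hi x x0) // ?eqxx // Fx F0.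
  by rewrite Hs ?orbT.
exists s => x Px; rewrite inE => /orP [/eqP Fx|Fx]; last exact: Hs.
by exfalso; apply: H; exists x.
Qed.
End G.

Section Lat.
Context {d : Order.disp_t} {L : bLatticeType d}.
Hypothesis hat : atomic (L := L).
Hypothesis hzd : zero_distributive (L := L).
Hypothesis h3 : at_least_three_atoms (L := L).
Local Open Scope order_scope.

Lemma atom_le_meet (a x y : L) : is_atom a -> a <= x -> a <= y -> x `&` y <> \bot.
Proof.
move=> [a0 _] ax ay E; apply: a0; apply/eqP; rewrite -lex0 -E lexI ax ay //.
Qed.

Lemma meet_atom (x y : L) : x `&` y <> \bot -> exists a, [/\ is_atom a, a <= x & a <= y].
Proof.
move=> H; have [a [Aa Ha]] := hat H; exists a; split => //.
  exact: le_trans Ha (leIl _ _).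
exact: le_trans Ha (leIr _ _).
Qed.

Lemma atoms_disj (a b : L) : is_atom a -> is_atom b -> a <> b -> a `&` b = \bot.
Proof.
move=> [a0 Ha] [b0 Hb] ab.
case: (Ha _ (leIl a b)) => // E.
have : a <= b by rewrite -E leIr.
by case/Hb => // /a0.
Qed.

Lemma third (p q : L) : exists r, [/\ is_atom r, r <> p & r <> q].
Proof.
have [a [b [c [[Aa Ab Ac] [ab ac bc]]]]] := h3.
case: (classic (a = p)) => ap; case: (classic (a = q)) => aq;
case: (classic (b = p)) => bp; case: (classic (b = q)) => bq;
  try (by exists a; split); try (by exists b; split);
  exists c; split => //; congruence.
Qed.

Lemma atom_vertex (x : L) : is_atom x -> Zstar x.
Proof.
move=> Ax; split; first by case: Ax.
have [r [Ar rx _]] := third x x.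
exists r; split; first by case: Ar.
apply: atoms_disj => //; congruence.
Qed.

Lemma walk2 (x y : L) : Zstar x -> Zstar y ->
  exists q, uw_walk Zstar Gc_adj x y q /\ (size q <= 2)%N.
Proof.
move=> Zx Zy.
case: (classic (x = y)) => [<-|xy]; first by exists [::]; split => //; split.
case: (classic (x `&` y = \bot)) => [m0|m0]; last first.
  by exists [:: y]; split => //; exact: (conj (conj Zx (conj (conj xy m0) (conj Zy I))) erefl).
have [p [Ap px]] := hat (proj1 Zx).
have [q [Aq qy]] := hat (proj1 Zy).
have pq : p <> q by move=> E; subst q; exact: (atom_le_meet Ap px qy).
have [r [Ar rp rq]] := third p q.
set z := p `|` q.
have Zz : Zstar z.
  split.
    by move=> E; case: Ap => + _; apply; apply/eqP; rewrite -lex0 -E leUl.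
  exists r; split; first by case: Ar.
  by rewrite meetC /z; exact: (hzd (atoms_disj Ar Ap rp) (atoms_disj Ar Aq rq)).
have H1 : Gc_adj x z.
  split.
  by move=> E; apply: (atom_le_meet Aq _ qy) m0; rewrite E leUr.
  exact: (atom_le_meet Ap px (leUl _ _)).
have H2 : Gc_adj z y.
  split.
  by move=> E; apply: (atom_le_meet Ap px _) m0; rewrite -E leUl.
  exact: (atom_le_meet Aq (leUr _ _) qy).
exists [:: z; y]; split; last by [].
exact: (conj (conj Zx (conj H1 (conj Zz (conj H2 (conj Zy I))))) erefl).
Qed.

Definition twin (u v : L) := forall a, is_atom a -> (a <= u) = (a <= v).
Definition Cpair (u v : L) := twin u v \/ (is_atom u /\ is_atom v).

Lemma Cpair_sym u v : Cpair u v -> Cpair v u.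
Proof. by case=> [H|[]]; [left => a Aa; rewrite H|right]. Qed.

Lemma twin_adj (u v w : L) : twin u v -> u `&` w <> \bot -> v `&` w <> \bot.
Proof.
move=> T /meet_atom [a [Aa au aw]].
by apply: (atom_le_meet Aa _ aw); rewrite -T.
Qed.

Lemma one_side (u v w : L) p : u <> v -> w <> u -> w <> v -> Zstar w -> Cpair u v ->
  shortest_path Zstar Gc_adj u w p -> v \in u :: p -> False.
Proof.
move=> uv wu wv Zw C [[Wp Lp] Sp] Hv.
have Zu : Zstar u by case: p Wp {Sp Lp Hv} => [|? ?] [].
have [p1 [p2 [E [W1 W2]]]] := walk_split Wp Lp Hv.
have s1 := size_ge1 W1 uv.
have s2 := size_ge1 W2 (nesym wv).
have [q [Wq Sq]] := walk2 Zu Zw.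
have := Sp _ Wq; rewrite E size_cat => Hle.
case: C => [T|[Au Av]].
  case: (classic (Gc_adj u w)) => Auw.
    have := Sp [:: w]; rewrite E size_cat => /(_ (conj (conj Zu (conj Auw (conj Zw I))) erefl)).
    by move: s1 s2 => /= ? ?; lia.
  have nvw : ~ Gc_adj v w.
    by move=> [_ H]; apply: Auw; split; [exact: nesym|]; apply: twin_adj H => a Aa; rewrite T.
  have := size_ge2 W2 (nesym wv) nvw; lia.
have nuv : ~ Gc_adj u v by move=> [_ H]; apply: H; exact: atoms_disj.
have := size_ge2 W1 uv nuv; lia.
Qed.

Lemma resolve_pair (s : seq L) (u v : L) :
  strong_resolving_set Zstar Gc_adj (fun w => w \in s) ->
  Zstar u -> Zstar v -> u <> v -> Cpair u v -> u \in s \/ v \in s.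
Proof.
move=> [HV HR] Zu Zv uv C.
have [w [ws [[p [Sp Hp]]|[p [Sp Hp]]]]] := HR u v Zu Zv uv.
- case: (classic (w = u)) => [<-|wu]; first by left.
  case: (classic (w = v)) => [<-|wv]; first by right.
  by exfalso; exact: (one_side uv wu wv (HV _ ws) C Sp Hp).
- case: (classic (w = u)) => [<-|wu]; first by left.
  case: (classic (w = v)) => [<-|wv]; first by right.
  by exfalso; exact: (one_side (nesym uv) wv wu (HV _ ws) (Cpair_sym C) Sp Hp).
Qed.

Lemma sdim_to_fin : sdim_finite (@Zstar d L) (@Gc_adj d L) -> graph_finite (@Zstar d L).
Proof.
move=> [s Hs].
have [As HAs] : exists As : seq L, forall a, is_atom a -> a \in As.
  case: (classic (exists a, is_atom a /\ a \notin s)) => [[a0 [A0 N0]]|H].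
    exists (a0 :: s) => a Aa; rewrite inE.
    case: (classic (a = a0)) => [->|aa0]; first by rewrite eqxx.
    case: (resolve_pair Hs (atom_vertex Aa) (atom_vertex A0) aa0 (or_intror (conj Aa A0))).
      by move=> ->; rewrite orbT.
    by move=> H0; rewrite H0 in N0.
  exists s => a Aa; apply: NNPP => N; apply: H; exists a; split => //; exact/negP.
pose f (x : L) := map_tuple (fun a => a <= x) (in_tuple As).
have Hinj : forall x y, (Zstar x /\ x \notin s) -> (Zstar y /\ y \notin s) -> f x = f y -> x = y.
  move=> x y [Zx xs] [Zy ys] /(congr1 val) /= /eq_in_map Fe.
  apply: NNPP => xy.
  have T : twin x y by move=> a Aa; apply: Fe; exact: HAs.
  case: (resolve_pair Hs Zx Zy xy (or_introl T)) => H.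
    by rewrite H in xs.
  by rewrite H in ys.
have [s2 Hs2] := fin_inj Hinj.
exists (s ++ s2) => x Zx; rewrite mem_cat.
case: (boolP (x \in s)) => //= xs; apply: Hs2; split => //.
Qed.

Lemma fin_to_sdim : graph_finite (@Zstar d L) -> sdim_finite (@Zstar d L) (@Gc_adj d L).
Proof.
move=> [s Hs].
have [s' Hs'] := filter_ex (@Zstar d L) s.
exists s'; split; first by move=> w /Hs' [].
move=> u v Zu Zv uv; exists u; split; first by apply/Hs'; split => //; exact: Hs.
right.
have [q [Wq Sq]] := walk2 Zv Zu.
have [p Sp] := exists_shortest (ex_intro _ q (conj Wq Sq)).
exists p; split => //.
case: Sp => [[_ Lp] _]; rewrite -Lp; exact: mem_last.
Qed.
End Lat.

Theorem corollary3p3 (d : Order.disp_t) (L : bLatticeType d) :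
  atomic (L := L) -> zero_distributive (L := L) -> at_least_three_atoms (L := L) ->
  (sdim_finite (@Zstar d L) (@Gc_adj d L) <-> graph_finite (@Zstar d L)).
Proof.
move=> ha hz h3; split; [exact: sdim_to_fin | exact: fin_to_sdim].
Qed.
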